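(* Let $\mathcal{F}=\langle Q_i:i<\omega\rangle$ be a sequence of quantifiers on $\mathbb{N}$, each of which is a finite boolean combination of principal quantifiers $Q_{A_{i,k}}$ (with $A_{i,k}\subseteq\mathbb{N}^{d_i}$). Let $\mathrm{Aut}(\mathcal{F})$ be the group of permutations of $\mathbb{N}$ fixing every $Q_i$. Then $\mathrm{Aut}(\mathcal{F})$ is a closed subgroup of $S_\infty$, and every orbit of $\mathrm{Aut}(\mathcal{F})$ on $\mathbb{N}^{<\omega}$ is definable in $\mathscr{L}_{\omega_1\omega}(\mathcal{F})$.
   Context: For $A\subseteq\mathbb{N}^d$, the principal quantifier $Q_A=\{X\subseteq\mathbb{N}^d:A\subseteq X\}$ is a quantifier of type $\langle d\rangle$ on $\mathbb{N}$. A permutation $g$ of $\mathbb{N}$ acts coordinatewise on tuples and on subsets by $g(X)=\{g(x):x\in X\}$; $g$ fixes a quantifier $Q$ of type $\langle d\rangle$ if $X\in Q\iff g(X)\in Q$ for all $X\subseteq\mathbb{N}^d$. $S_\infty$ is the group of permutations of $\mathbb{N}$ with the topology of pointwise convergence. $\mathscr{L}_{\omega_1\omega}(\mathcal{F})$ extends $\mathscr{L}_{\omega_1\omega}$ by formulas $Q_ix\,\varphi(x,y)$ for each $i$, with $\mathbb{N}\models Q_ix\,\varphi(x,b)$ iff $\{a\in\mathbb{N}^{d_i}:\mathbb{N}\models\varphi(a,b)\}\in Q_i$. A set of tuples is definable in $\mathscr{L}_{\omega_1\omega}(\mathcal{F})$ if some parameter-free formula whose only non-logical symbols are the $Q_i$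 defines it in $\mathbb{N}$. *)

(* Defs.v *)
From mathcomp Require Import all_boot.
Set Implicit Arguments. Unset Strict Implicit. Unset Printing Implicit Defensive.

Definition tup (d : nat) := 'I_d -> nat.

Definition quant (d : nat) := (tup d -> Prop) -> Prop.

Definition principal (d : nat) (A : tup d -> Prop) : quant d :=
  fun X => forall a, A a -> X a.

Inductive bexpr : Type :=
| BAtom : nat -> bexpr
| BTrue : bexpr
| BFalse : bexpr
| BNeg : bexpr -> bexpr
| BAnd : bexpr -> bexpr -> bexpr
| BOr : bexpr -> bexpr -> bexpr.

Fixpoint beval (v : nat -> Prop) (e : bexpr) : Prop :=
  match e with
  | BAtom k => v k
  | BTrue => True
  | BFalse => False
  | BNeg e1 => ~ beval v e1
  | BAnd e1 e2 => beval v e1 /\ beval v e2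
  | BOr e1 e2 => beval v e1 \/ beval v e2
  end.

Definition bool_comb_quant (d : nat) (A : nat -> tup d -> Prop) (e : bexpr)
  : quant d := fun X => beval (fun k => principal (A k) X) e.

Definition img (g : nat -> nat) (d : nat) (X : tup d -> Prop) : tup d -> Prop :=
  fun b => exists a, X a /\ forall k, b k = g (a k).

Definition fixes_quant (g : nat -> nat) (d : nat) (Q : quant d) : Prop :=
  forall X, Q X <-> Q (img g X).

Definition in_Aut (d : nat -> nat) (Q : forall i, quant (d i)) (g : nat -> nat)
  : Prop := bijective g /\ forall i, fixes_quant g (Q i).

(* Subgroup of S_infinity (elements of P are assumed permutations). *)
Definition is_subgroup (P : (nat -> nat) -> Prop) : Prop :=
  [/\ P id,
      (forall g h, P g -> P h -> P (g \o h)) &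
      (forall g g', P g -> cancel g g' -> cancel g' g -> P g')].

(* Closed in S_infinity for the topology of pointwise convergence. *)
Definition is_closed_Sinf (P : (nat -> nat) -> Prop) : Prop :=
  forall h, bijective h ->
    (forall n, exists g, P g /\ forall x, x < n -> g x = h x) -> P h.

(* Formulas of L_{omega_1 omega}(F) with no non-logical symbols other than
   the Q_i: variables are natural numbers; countable conjunctions;
   Q_i binds a d_i-tuple of variables. *)
Inductive formula (d : nat -> nat) : Type :=
| FEq : nat -> nat -> formula d
| FNeg : formula d -> formula d
| FConj : (nat -> formula d) -> formula d
| FEx : nat -> formula d -> formula d
| FQ : forall i : nat, ('I_(d i) -> nat) -> formula d -> formula d.

Fixpoint fv_in (d : nat -> nat) (f : formula d) (S : nat -> Prop) : Prop :=
  match f with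
  | FEq x y => S x /\ S y
  | FNeg f1 => fv_in f1 S
  | FConj fs => forall k, fv_in (fs k) S
  | FEx x f1 => fv_in f1 (fun y => y = x \/ S y)
  | FQ i xs f1 => fv_in f1 (fun y => (exists k, xs k = y) \/ S y)
  end.

Definition upd (s : nat -> nat) (x v : nat) : nat -> nat :=
  fun y => if y == x then v else s y.

Definition upd_many (s : nat -> nat) (m : nat) (xs : 'I_m -> nat)
  (a : 'I_m -> nat) : nat -> nat :=
  fun y => match [pick k | xs k == y] with Some k => a k | None => s y end.

Fixpoint sat (d : nat -> nat) (Q : forall i, quant (d i)) (s : nat -> nat)
  (f : formula d) : Prop :=
  match f with
  | FEq x y => s x = s y
  | FNeg f1 => ~ sat Q s f1
  | FConj fs => forall k, sat Q s (fs k)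
  | FEx x f1 => exists v, sat Q (upd s x v) f1
  | FQ i xs f1 => Q i (fun a => sat Q (upd_many s xs a) f1)
  end.

Definition definable (d : nat -> nat) (Q : forall i, quant (d i)) (n : nat)
  (R : tup n -> Prop) : Prop :=
  exists f : formula d, fv_in f (fun y => y < n) /\
    forall s : nat -> nat, sat Q s f <-> R (fun k => s k).

Definition Aut_orbit (P : (nat -> nat) -> Prop) (n : nat) (a : tup n) : tup n -> Prop :=
  fun b => exists g, P g /\ forall k, b k = g (a k).

(* Main.v *)
From Stdlib Require Import Classical ClassicalEpsilon FunctionalExtensionality PropExtensionality.
Require Import Defs.
From mathcomp Require Import all_boot.
Set Implicit Arguments. Unset Strict Implicit. Unset Printing Implicit Defensive.

Lemma pred_ext (T : Type) (X Y : T -> Prop) : (forall a, X a <-> Y a) -> X = Y.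
Proof. move=> H; apply: functional_extensionality => a; apply: propositional_extensionality; exact: H. Qed.

Lemma img_inv (g g' : nat -> nat) (dd : nat) (X : tup dd -> Prop) :
  cancel g g' -> cancel g' g -> forall b, img g X b <-> X (g' \o b).
Proof.
move=> gK g'K b; split.
- case=> a [Xa Hb].
  have -> : g' \o b = a by apply: functional_extensionality => k /=; rewrite Hb gK.
  exact: Xa.
- move=> Xb; exists (g' \o b); split=> // k /=; by rewrite g'K.
Qed.

Lemma img_id dd (X : tup dd -> Prop) : img id X = X.
Proof.
apply: pred_ext => b; rewrite (@img_inv id id) //.
Qed.

Lemma img_comp (g h : nat -> nat) dd (X : tup dd -> Prop) :
  img (g \o h) X = img g (img h X).
Proof.
apply: pred_ext => b; split.
- case=> a [Xa Hb]; exists (h \o a); split; last by move=> k; rewrite Hb.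
  by exists a; split.
- case=> c [[a [Xa Hc]] Hb]; exists a; split=> // k; by rewrite Hb Hc.
Qed.

Lemma img_cancel (g g' : nat -> nat) dd (X : tup dd -> Prop) :
  cancel g g' -> cancel g' g -> img g (img g' X) = X.
Proof.
move=> gK g'K; apply: pred_ext => b.
rewrite (img_inv _ gK g'K) (img_inv _ g'K gK).
by have -> : g \o (g' \o b) = b by apply: functional_extensionality => k /=; rewrite g'K.
Qed.

Lemma Aut_subgroup (d : nat -> nat) (Q : forall i, quant (d i)) :
  is_subgroup (in_Aut Q).
Proof.
split.
- split; first by exists id.
  by move=> i X; rewrite img_id.
- move=> g h [bg Hg] [bh Hh]; split; first exact: bij_comp.
  move=> i X; rewrite img_comp; rewrite -Hg; exact: Hh.
- move=> g g' [bg Hg] gK g'K; split; first by exists g.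
  move=> i X; rewrite (Hg i (img g' X)) img_cancel //.
Qed.

Lemma fv_mono (d : nat -> nat) (f : formula d) (S S' : nat -> Prop) :
  fv_in f S -> (forall y, S y -> S' y) -> fv_in f S'.
Proof.
elim: f S S' => [x y|f IH|fs IH|x f IH|i xs f IH] S S' /=.
- by case=> ? ? H; split; apply: H.
- by move=> H1 H; apply: IH H1 H.
- by move=> H1 H k; apply: IH (H1 k) H.
- move=> H1 H; apply: IH H1 _ => y [->|Sy]; [by left|by right; apply: H].
- move=> H1 H; apply: IH H1 _ => y [E|Sy]; [by left|by right; apply: H].
Qed.

Lemma upd_many_in (s : nat -> nat) m (xs : 'I_m -> nat) a y :
  upd_many s xs a y = match [pick k | xs k == y] with Some k => a k | None => s y end.
Proof. by []. Qed.

Lemma sat_agree (d : nat -> nat) (Q : forall i, quant (d i)) (f : formula d) :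
  forall (S : nat -> Prop) s t, fv_in f S -> (forall y, S y -> s y = t y) ->
  (sat Q s f <-> sat Q t f).
Proof.
elim: f => [x y|f IH|fs IH|x f IH|i xs f IH] S s t /=.
- by case=> Sx Sy H; rewrite (H x Sx) (H y Sy).
- by move=> H1 H; rewrite (IH S s t H1 H).
- move=> H1 H; split=> Hk k; [rewrite -(IH k S s t (H1 k) H) | rewrite (IH k S s t (H1 k) H)]; exact: Hk.
- move=> H1 H; split; case=> v Hv; exists v.
  + rewrite -(IH _ (upd s x v) (upd t x v) H1) // => y [->|Sy]; rewrite /upd.
      by rewrite eqxx.
    by case: (y == x) => //; apply: H.
  + rewrite (IH _ (upd s x v) (upd t x v) H1) // => y [->|Sy]; rewrite /upd.
      by rewrite eqxx.
    by case: (y == x) => //; apply: H.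
- move=> H1 H.
  have -> : (fun a => sat Q (upd_many s xs a) f) = (fun a => sat Q (upd_many t xs a) f); last by [].
  apply: pred_ext => a; apply: (IH _ _ _ H1) => y Hy; rewrite /upd_many.
  case: pickP => [k //|Hn]; case: Hy => [[k Hk]|Sy]; last exact: H.
  by move: (Hn k); rewrite Hk eqxx.
Qed.

Lemma sat_inv (d : nat -> nat) (Q : forall i, quant (d i)) g :
  in_Aut Q g -> forall f s, sat Q s f <-> sat Q (g \o s) f.
Proof.
case=> [[g' gK g'K] Hg].
have ginj : injective g := can_inj gK.
elim=> [x y|f IH|fs IH|x f IH|i xs f IH] s /=.
- by split=> [->//|/ginj].
- by rewrite (IH s).
- by split=> Hk k; [rewrite -IH | rewrite IH].
- have E : forall v, upd (g \o s) x (g v) = g \o upd s x v.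
    by move=> v; apply: functional_extensionality => y; rewrite /upd /=; case: (y == x).
  split; case=> v Hv.
  + by exists (g v); rewrite E -IH.
  + exists (g' v); rewrite IH -E g'K; exact: Hv.
- have E : forall a, upd_many (g \o s) xs (g \o a) = g \o upd_many s xs a.
    by move=> a; apply: functional_extensionality => y; rewrite /upd_many /=; case: pickP.
  have -> : (fun a => sat Q (upd_many (g \o s) xs a) f) = img g (fun a => sat Q (upd_many s xs a) f).
    apply: pred_ext => b; rewrite (img_inv _ gK g'K) (IH (upd_many s xs (g' \o b))) -E.
    by have -> : g \o (g' \o b) = b by apply: functional_extensionality => k /=; rewrite g'K.
  exact: Hg.
Qed.

Fixpoint in_atoms (k : nat) (e : bexpr) : Prop :=
  match e with
  | BAtom j => j = k
  | BTrue | BFalse => False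
  | BNeg e1 => in_atoms k e1
  | BAnd e1 e2 | BOr e1 e2 => in_atoms k e1 \/ in_atoms k e2
  end.

Lemma beval_congr (e : bexpr) (v v' : nat -> Prop) :
  (forall k, in_atoms k e -> (v k <-> v' k)) -> (beval v e <-> beval v' e).
Proof.
elim: e => [j|||e IH|e1 IH1 e2 IH2|e1 IH1 e2 IH2] /= H.
- exact: H.
- by [].
- by [].
- by rewrite IH.
- by rewrite IH1 ?IH2 // => k Hk; apply: H; [right|left].
- by rewrite IH1 ?IH2 // => k Hk; apply: H; [right|left].
Qed.

Lemma atoms_bound (e : bexpr) (P : nat -> nat -> Prop) :
  (forall k N N', N <= N' -> P k N -> P k N') -> (forall k, exists N, P k N) ->
  exists N, forall k, in_atoms k e -> P k N.
Proof.
move=> Pm Pe; elim: e => [j|||e IH|e1 [N1 H1] e2 [N2 H2]|e1 [N1 H1] e2 [N2 H2]] /=.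
- by case: (Pe j) => N HN; exists N => k <-.
- by exists 0.
- by exists 0.
- exact: IH.
- exists (maxn N1 N2) => k [Hk|Hk]; [apply: Pm (H1 k Hk); exact: leq_maxl|apply: Pm (H2 k Hk); exact: leq_maxr].
- exists (maxn N1 N2) => k [Hk|Hk]; [apply: Pm (H1 k Hk); exact: leq_maxl|apply: Pm (H2 k Hk); exact: leq_maxr].
Qed.

Definition bnd (N dd : nat) (t : tup dd) := forall j, t j < N.

Lemma bnd_ex dd (t : tup dd) : exists N, bnd N t.
Proof. exists (\max_j t j).+1 => j; rewrite ltnS; exact: leq_bigmax. Qed.

Definition Xext (N dd : nat) (X : tup dd -> Prop) : tup dd -> Prop :=
  fun t => (exists j, N <= t j) \/ X t.

Lemma Xext_nbnd N dd (X : tup dd -> Prop) t : Xext N X t <-> ~ (bnd N t /\ ~ X t).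
Proof.
rewrite /Xext /bnd; split.
- case=> [[j Hj] [Hb _]|Xt [_ ?] //]; by move: (Hb j); rewrite ltnNge Hj.
- move=> H; case: (classic (X t)) => [|nX]; first by right.
  left; apply: NNPP => Hn; apply: H; split=> // j; rewrite ltnNge; apply/negP => Hj.
  by apply: Hn; exists j.
Qed.

Lemma approx dd (B : nat -> tup dd -> Prop) (ex : bexpr) (h h' : nat -> nat)
  (hK : cancel h h') (h'K : cancel h' h) (X : tup dd -> Prop) :
  exists N, forall g g', cancel g g' -> cancel g' g -> (forall x, x < N -> g x = h x) ->
  (bool_comb_quant B ex X <-> bool_comb_quant B ex (Xext N X)) /\
  (bool_comb_quant B ex (img h X) <-> bool_comb_quant B ex (img g (Xext N X))).
Proof.
pose P k N := (principal (B k) X \/ exists a, B k a /\ ~ X a /\ bnd N a) /\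
  (principal (B k) (img h X) \/ exists c, B k (h \o c) /\ ~ X c /\ bnd N c).
have Pm : forall k N N', N <= N' -> P k N -> P k N'.
  move=> k N N' le [H1 H2]; split.
    case: H1 => [?|[a [? [? Hb]]]]; [by left|right; exists a; split; [done|split; [done|move=> j; exact: leq_trans (Hb j) le]]].
  case: H2 => [?|[c [? [? Hc]]]]; [by left|right; exists c; split; [done|split; [done|move=> j; exact: leq_trans (Hc j) le]]].
have Pe : forall k, exists N, P k N.
  move=> k.
  have [N1 H1] : exists N, principal (B k) X \/ exists a, B k a /\ ~ X a /\ bnd N a.
    case: (classic (principal (B k) X)) => H; first by exists 0; left.
    have [a Ha] : exists a, ~ (B k a -> X a) by apply: not_all_ex_not.
    have [N HN] := bnd_ex a.
    exists N; right; exists a; split; [tauto|split; [tauto|exact: HN]].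
  have [N2 H2] : exists N, principal (B k) (img h X) \/ exists c, B k (h \o c) /\ ~ X c /\ bnd N c.
    case: (classic (principal (B k) (img h X))) => H; first by exists 0; left.
    have [b Hb] : exists b, ~ (B k b -> img h X b) by apply: not_all_ex_not.
    have [N HN] := bnd_ex (h' \o b).
    exists N; right; exists (h' \o b).
    have -> : h \o (h' \o b) = b by apply: functional_extensionality => j /=; rewrite h'K.
    split; first tauto.
    by rewrite -(img_inv X hK h'K); split; [tauto|].
  exists (maxn N1 N2); split.
  - case: H1 => [?|[a [? [? Hb]]]]; [by left|right; exists a; split; [done|split; [done|move=> j; apply: leq_trans (Hb j) _; exact: leq_maxl]]].
  - case: H2 => [?|[c [? [? Hc]]]]; [by left|right; exists c; split; [done|split; [done|move=> j; apply: leq_trans (Hc j) _; exact: leq_maxr]]].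
have [N HN] := atoms_bound ex Pm Pe.
exists N => g g' gK g'K Hgh; split; apply: beval_congr => k /HN [H1 H2].
- split=> Hp a Ba; last first.
    case: H1 => [Hx|[a' [Ba' [nX Hb]]]]; first exact: Hx Ba; exfalso.
    move/Xext_nbnd: (Hp a' Ba'); by apply; split.
  by right; apply: Hp.
- split=> Hp.
  + move=> s Bs; rewrite (img_inv _ gK g'K).
    case: (classic (exists j, N <= (g' \o s) j)) => [Hj|Hj]; first by left.
    right; move: (Hp s Bs); rewrite (img_inv _ hK h'K).
    suff -> : g' \o s = h' \o s by [].
    apply: functional_extensionality => j /=.
    have lt : g' (s j) < N by rewrite ltnNge; apply/negP => Hn; apply: Hj; exists j.
    by rewrite -{2}(g'K (s j)) (Hgh _ lt) hK.
  + move=> b Bb; case: H2 => [Hx|[c [Bc [nX Hc]]]]; first exact: Hx Bb; exfalso.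
    move: (Hp _ Bc); rewrite (img_inv _ gK g'K).
    have -> : g' \o (h \o c) = c.
      by apply: functional_extensionality => j /=; rewrite -(Hgh _ (Hc j)) gK.
    by move/Xext_nbnd; apply; split.
Qed.

Lemma Aut_closed dd (A : forall i : nat, nat -> tup (dd i) -> Prop) (e : nat -> bexpr) :
  is_closed_Sinf (in_Aut (fun i => bool_comb_quant (A i) (e i))).
Proof.
move=> h [h' hK h'K] Happ; split; first by exists h'.
move=> i X.
have [N HN] := approx (A i) (e i) hK h'K X.
have [g [[[g' gK g'K] Hg] Hgh]] := Happ N.
have [E1 E2] := HN g g' gK g'K Hgh.
by rewrite E1 E2; apply: Hg.
Qed.

Section Equiv.
Variable (d : nat -> nat) (Q : forall i, quant (d i)).

Definition tequiv m s t := forall f : formula d, fv_in f (fun y => y < m) ->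
  (sat Q s f <-> sat Q t f).

Lemma tequiv_sym m s t : tequiv m s t -> tequiv m t s.
Proof. by move=> H f Hf; rewrite (H f Hf). Qed.

Lemma tequiv_agree m s s' t : (forall y, y < m -> s y = s' y) -> tequiv m s t -> tequiv m s' t.
Proof.
move=> E H f Hf; rewrite -(H f Hf); apply: sat_agree Hf _ => y Hy; by rewrite E.
Qed.

Lemma tequiv_le m m' s t : m' <= m -> tequiv m s t -> tequiv m' s t.
Proof. move=> le H f Hf; apply: H; apply: fv_mono Hf _ => y Hy; exact: leq_trans Hy le. Qed.

Lemma distinguish m s t : ~ tequiv m s t ->
  exists f, fv_in f (fun y => y < m) /\ sat Q s f /\ ~ sat Q t f.
Proof.
move=> H; have [f Hf] := not_all_ex_not _ _ H.
have [Hfv Hn] := imply_to_and _ _ Hf.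
case: (classic (sat Q s f)) => Hs.
- exists f; split=> //; split=> // Ht; apply: Hn; tauto.
- exists (FNeg f); split=> //=; split=> // Ht; apply: Hn; split=> //; tauto.
Qed.

Lemma forth m s t : tequiv m s t -> forall c, exists dd, tequiv m.+1 (upd s m c) (upd t m dd).
Proof.
move=> H c; apply: NNPP => Hn.
have H' : forall dd, exists f, fv_in f (fun y => y < m.+1) /\ sat Q (upd s m c) f /\ ~ sat Q (upd t m dd) f.
  move=> dd; apply: distinguish => He; apply: Hn; by exists dd.
pose G dd := proj1_sig (constructive_indefinite_description _ (H' dd)).
have HG dd : fv_in (G dd) (fun y => y < m.+1) /\ sat Q (upd s m c) (G dd) /\ ~ sat Q (upd t m dd) (G dd).
  exact: proj2_sig (constructive_indefinite_description _ (H' dd)).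
have Hfv : fv_in (FEx m (FConj G)) (fun y => y < m).
  move=> /= k; apply: fv_mono (proj1 (HG k)) _ => y; rewrite ltnS leq_eqVlt.
  by case/orP => [/eqP ->|]; [left|right].
have := H _ Hfv; rewrite /=.
case=> [H1 _]; case: H1 => [|v Hv].
  by exists c => k; exact: (proj1 (proj2 (HG k))).
by apply: (proj2 (proj2 (HG v))); apply: Hv.
Qed.

Lemma back m s t : tequiv m s t -> forall dd, exists c, tequiv m.+1 (upd s m c) (upd t m dd).
Proof.
move=> /tequiv_sym H dd; have [c Hc] := forth H dd; exists c; exact: tequiv_sym.
Qed.

Lemma choose_forth m s t c : { dd | tequiv m s t -> tequiv m.+1 (upd s m c) (upd t m dd) }.
Proof.
apply: constructive_indefinite_description.
case: (classic (tequiv m s t)) => H.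
- have [dd Hd] := forth H c; by exists dd.
- by exists 0.
Qed.

Definition fF m s t c := proj1_sig (choose_forth m s t c).

Section BF.
Variables (n : nat) (s0 t0 : nat -> nat).
Hypothesis H0 : tequiv n s0 t0.

Fixpoint st (x : nat) : (nat -> nat) * (nat -> nat) :=
  match x with
  | 0 => (s0, t0)
  | x'.+1 =>
    let s := (st x').1 in let t := (st x').2 in
    let k := n + x'.*2 in
    let s1 := upd s k x' in let t1 := upd t k (fF k s t x') in
    let t2 := upd t1 k.+1 x' in let s2 := upd s1 k.+1 (fF k.+1 t1 s1 x') in
    (s2, t2)
  end.

Lemma st_equiv x : tequiv (n + x.*2) (st x).1 (st x).2.
Proof.
elim: x => [|x IH] /=; first by rewrite addn0.
set k := n + x.*2.
have E1 : tequiv k.+1 (upd (st x).1 k x) (upd (st x).2 k (fF k (st x).1 (st x).2 x)).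
  exact: (proj2_sig (choose_forth k (st x).1 (st x).2 x) IH).
have E2 := proj2_sig (choose_forth k.+1 _ _ x) (tequiv_sym E1).
rewrite doubleS addnS addnS; exact: tequiv_sym E2.
Qed.

Lemma st_stable x y : y < n + x.*2 -> (st x.+1).1 y = (st x).1 y /\ (st x.+1).2 y = (st x).2 y.
Proof.
move=> Hy /=; rewrite /upd.
have -> : (y == (n + x.*2).+1) = false by apply/negbTE; rewrite neq_ltn ltnS ltnW.
have -> : (y == (n + x.*2)) = false by apply/negbTE; rewrite neq_ltn Hy.
by [].
Qed.

Lemma st_stable' x x' y : x <= x' -> y < n + x.*2 ->
  (st x').1 y = (st x).1 y /\ (st x').2 y = (st x).2 y.
Proof.
move=> le Hy; elim: x' le => [|x' IH]; first by rewrite leqn0 => /eqP ->.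
rewrite leq_eqVlt => /orP [/eqP <-//|]; rewrite ltnS => le.
have [E1 E2] := IH le.
have Hy' : y < n + x'.*2 by apply: leq_trans Hy _; rewrite leq_add2l leq_double.
have [F1 F2] := st_stable Hy'.
by rewrite F1 F2.
Qed.

Definition S y := (st y.+1).1 y.
Definition T y := (st y.+1).2 y.

Lemma ST_st x y : y < n + x.*2 -> S y = (st x).1 y /\ T y = (st x).2 y.
Proof.
move=> Hy; rewrite /S /T.
have Hy1 : y < n + y.+1.*2.
  rewrite -addnn; apply: leq_trans (_ : y.+1 <= y.+1 + y.+1) _; first exact: leq_addr.
  exact: leq_addl.
have [A1 A2] := st_stable' (leq_maxl x y.+1) Hy.
have [B1 B2] := st_stable' (leq_maxr x y.+1) Hy1.
by rewrite -A1 -A2 B1 B2.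
Qed.

Lemma ST_equiv m : tequiv m S T.
Proof.
have le : m <= n + m.*2.
  rewrite -addnn; apply: leq_trans (leq_addr m m) _; exact: leq_addl.
move=> f Hf.
have Hf' : fv_in f (fun y => y < n + m.*2) by apply: fv_mono Hf _ => y Hy; exact: leq_trans Hy le.
rewrite (@sat_agree d Q f _ S (st m).1 Hf'); last by move=> y Hy; case: (ST_st Hy).
rewrite (@sat_agree d Q f _ T (st m).2 Hf'); last by move=> y Hy; case: (ST_st Hy).
exact: st_equiv Hf'.
Qed.

Lemma ST_eq i j : S i = S j <-> T i = T j.
Proof.
have Hf : fv_in (FEq d i j) (fun y => y < (maxn i j).+1).
  by split=> /=; rewrite ltnS ?leq_maxl ?leq_maxr.
exact: (ST_equiv Hf).
Qed.

Lemma S_init y : y < n -> S y = s0 y /\ T y = t0 y.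
Proof. move=> Hy; apply: (ST_st (x := 0)); by rewrite addn0. Qed.

Lemma S_forth x : S (n + x.*2) = x.
Proof.
have Hy : n + x.*2 < n + x.+1.*2 by rewrite ltn_add2l doubleS ltnS ltnW.
case: (ST_st Hy) => -> _ /=; rewrite /upd.
have -> : (n + x.*2 == (n + x.*2).+1) = false by apply/negbTE; rewrite neq_ltn ltnSn.
by rewrite eqxx.
Qed.

Lemma T_back x : T (n + x.*2).+1 = x.
Proof.
have Hy : (n + x.*2).+1 < n + x.+1.*2 by rewrite doubleS addnS addnS ltnS ltnSn.
by case: (ST_st Hy) => _ -> /=; rewrite /upd eqxx.
Qed.

Definition gbf x := T (n + x.*2).
Definition gbf' y := S (n + y.*2).+1.

Lemma gbf_S j : gbf (S j) = T j.
Proof. rewrite /gbf; apply/ST_eq; exact: S_forth. Qed.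

Lemma gbfK : cancel gbf gbf'.
Proof.
move=> x; rewrite /gbf'.
have E : T (n + (gbf x).*2).+1 = T (n + x.*2) by rewrite T_back.
by move/ST_eq: E; rewrite S_forth.
Qed.

Lemma gbf'K : cancel gbf' gbf.
Proof. move=> y; by rewrite /gbf' gbf_S T_back. Qed.

End BF.
End Equiv.
Unset Implicit Arguments.

Section Code.
Variable dd : nat.
Definition code (m : nat) : tup dd := fun j =>
  match unpickle m with Some F => (F : {ffun 'I_dd -> nat}) j | None => 0 end.
Lemma code_surj (w : tup dd) : exists m, code m = w.
Proof.
exists (pickle [ffun k => w k]); apply: functional_extensionality => k.
by rewrite /code pickleK ffunE.
Qed.
End Code.

Lemma upd_many_xs (s : nat -> nat) m M (a : 'I_m -> nat) (k : 'I_m) :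
  upd_many s (fun j : 'I_m => M + j) a (M + k) = a k.
Proof.
rewrite /upd_many; case: pickP => [k' /eqP /addnI E|Hn].
- by congr a; apply: val_inj.
- by move: (Hn k); rewrite eqxx.
Qed.

Lemma upd_many_low (s : nat -> nat) m M (a : 'I_m -> nat) y :
  y < M -> upd_many s (fun j : 'I_m => M + j) a y = s y.
Proof.
move=> Hy; rewrite /upd_many; case: pickP => [k' /eqP E|//].
by move: Hy; rewrite -E ltnNge leq_addr.
Qed.

Section AutTypes.
Variables (d : nat -> nat) (A : forall i : nat, nat -> tup (d i) -> Prop) (e : nat -> bexpr).
Let Q := fun i => bool_comb_quant (A i) (e i).

Definition tru : formula d := FEx 0 (FEq d 0 0).
Lemma tru_sat s : sat Q s tru.
Proof. by exists 0. Qed.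
Lemma tru_fv S : fv_in tru S.
Proof. by split; left. Qed.

Variables (n : nat) (S T : nat -> nat) (g g' : nat -> nat).
Hypotheses (gK : cancel g g') (g'K : cancel g' g) (HST : forall m, tequiv Q m S T)
  (HS : forall c, S (n + c.*2) = c) (HT : forall c, T (n + c.*2) = g c).

Section Fix.
Variables (i N : nat) (X : tup (d i) -> Prop).
Let M := n + N.*2.
Let xs := fun j : 'I_(d i) => M + j.

Definition chi (m : nat) : formula d :=
  if excluded_middle_informative (bnd N (code (d i) m) /\ ~ X (code (d i) m)) then
    FConj (fun j => match (insub j : option 'I_(d i)) with
                    | Some k => FEq d (M + k) (n + (code (d i) m k).*2)
                    | None => tru end)
  else FNeg tru.

Definition Phi := @FQ d i xs (FConj (fun m => FNeg (chi m))).

Lemma Phi_fv : fv_in Phi (fun y => y < M).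
Proof.
move=> m /=; rewrite /chi; destruct (excluded_middle_informative _) as [[Hb Hx0]|Hx0]; simpl; last by split; left.
move=> j; case: (@insubP nat (fun x => x < d i) 'I_(d i) j) => [k _ _|_]; last by split; left.
split; first by left; exists k.
by right; rewrite /M ltn_add2l ltn_double.
Qed.

Lemma chi_sat s a m : sat Q (upd_many s xs a) (chi m) <->
  bnd N (code (d i) m) /\ ~ X (code (d i) m) /\
  forall k, a k = s (n + (code (d i) m k).*2).
Proof.
rewrite /chi; destruct (excluded_middle_informative _) as [[Hb HX]|Hn]; simpl; last first.
  split=> [H|[Hb [HX _]]]; first by case: H; exact: tru_sat.
  by case: Hn.
split.
- move=> H; split=> //; split=> // k.
  move: (H k); rewrite valK /= /xs upd_many_xs upd_many_low //.
  by rewrite /M ltn_add2l ltn_double.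
- case=> _ [_ Hk] j; case: (@insubP nat (fun x => x < d i) 'I_(d i) j) => [k _ _|_]; last exact: tru_sat.
  rewrite /= /xs upd_many_xs upd_many_low ?Hk //.
  by rewrite /M ltn_add2l ltn_double.
Qed.

Lemma Phi_pred s : (fun a => sat Q (upd_many s xs a) (FConj (fun m => FNeg (chi m)))) =
  (fun a => ~ exists w, bnd N w /\ ~ X w /\ forall k, a k = s (n + (w k).*2)).
Proof.
apply: pred_ext => a /=; split.
- move=> H [w [Hb [HX Hk]]]; have [m Hm] := code_surj _ w.
  apply: (H m); apply/chi_sat; rewrite Hm; tauto.
- move=> H m /chi_sat Hc; apply: H; exists (code (d i) m); exact: Hc.
Qed.

Lemma Phi_fix : Q i (Xext N X) <-> Q i (img g (Xext N X)).
Proof.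
have E := HST M Phi Phi_fv; rewrite /= !Phi_pred in E.
have E1 : Xext N X = (fun a => ~ exists w, bnd N w /\ ~ X w /\ forall k, a k = S (n + (w k).*2)).
  apply: pred_ext => a; rewrite Xext_nbnd; split.
  - move=> H [w [Hb [HX Hk]]]; apply: H.
    have -> : a = w by apply: functional_extensionality => k; rewrite Hk HS.
    by [].
  - move=> H [Hb HX]; apply: H; exists a; split=> //; split=> // k; by rewrite HS.
have E2 : img g (Xext N X) = (fun a => ~ exists w, bnd N w /\ ~ X w /\ forall k, a k = T (n + (w k).*2)).
  apply: pred_ext => a; rewrite (img_inv _ gK g'K) Xext_nbnd; split.
  - move=> H [w [Hb [HX Hk]]]; apply: H.
    have -> : g' \o a = w by apply: functional_extensionality => k /=; rewrite Hk HT gK.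
    by [].
  - move=> H [Hb HX]; apply: H; exists (g' \o a); split=> //; split=> // k; by rewrite HT /= g'K.
rewrite E2 E1; exact: E.
Qed.
End Fix.

Lemma aut_from_types : in_Aut Q g.
Proof.
split; first by exists g'.
move=> i X.
have [N HN] := approx (A i) (e i) gK g'K X.
have [E1 E2] := HN g g' gK g'K (fun _ _ => erefl).
rewrite /Q /= in E1 E2 *; rewrite E1 E2.
exact: (Phi_fix i N X).
Qed.
End AutTypes.
Set Implicit Arguments.

Lemma types_to_aut (d : nat -> nat) (A : forall i : nat, nat -> tup (d i) -> Prop) (e : nat -> bexpr)
  n s t : tequiv (fun i => bool_comb_quant (A i) (e i)) n s t ->
  exists g, in_Aut (fun i => bool_comb_quant (A i) (e i)) g /\ forall k, k < n -> g (s k) = t k.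
Proof.
move=> H0; set Q := (fun i => bool_comb_quant (A i) (e i)) in H0 *.
exists (gbf Q n s t); split.
- apply: (@aut_from_types d A e n (S Q n s t) (T Q n s t) _ (gbf' Q n s t) (gbfK H0) (gbf'K H0)).
  + move=> m; exact: (@ST_equiv d Q n s t H0 m).
  + exact: S_forth.
  + by [].
- move=> k lt; have [E1 E2] := S_init Q s t lt.
  by rewrite -E1 -E2 gbf_S.
Qed.

Definition ext n (a : tup n) : nat -> nat := fun y =>
  match (insub y : option 'I_n) with Some k => a k | None => 0 end.

Lemma ext_ord n (a : tup n) (k : 'I_n) : ext a k = a k.
Proof. by rewrite /ext valK. Qed.

Definition tm (m : nat) : nat -> nat := fun y => nth 0 (odflt [::] (unpickle m : option (seq nat))) y.

Lemma tm_surj n (s : nat -> nat) : exists m, forall y, y < n -> tm m y = s y.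
Proof.
exists (pickle (map s (iota 0 n))) => y lt.
by rewrite /tm pickleK /= (nth_map 0) ?size_iota // nth_iota.
Qed.

Theorem proposition23 (d : nat -> nat)
  (A : forall i : nat, nat -> tup (d i) -> Prop) (e : nat -> bexpr) :
  let Q := fun i => bool_comb_quant (A i) (e i) in
  (is_subgroup (in_Aut Q) /\ is_closed_Sinf (in_Aut Q)) /\
  (forall (n : nat) (a : tup n), definable Q (Aut_orbit (in_Aut Q) a)).
Proof.
move=> Q; split; first by split; [exact: Aut_subgroup | exact: Aut_closed].
move=> n a.
have HF : forall m, exists f, fv_in f (fun y => y < n) /\ sat Q (ext a) f /\
    (~ tequiv Q n (ext a) (tm m) -> ~ sat Q (tm m) f).
  move=> m; case: (classic (tequiv Q n (ext a) (tm m))) => H.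
  - exists (tru d); split; first by split; left.
    split; first by exists 0.
    by [].
  - have [f [Hf [H1 H2]]] := distinguish H.
    by exists f.
pose F m := proj1_sig (constructive_indefinite_description _ (HF m)).
have HFm m : fv_in (F m) (fun y => y < n) /\ sat Q (ext a) (F m) /\
    (~ tequiv Q n (ext a) (tm m) -> ~ sat Q (tm m) (F m)).
  exact: proj2_sig (constructive_indefinite_description _ (HF m)).
exists (FConj F); split; first by move=> m; exact: (proj1 (HFm m)).
move=> s; split.
- move=> /= Hs.
  have He : tequiv Q n (ext a) s.
    apply: NNPP => Hn.
    have [m Hm] := tm_surj n s.
    have Hn' : ~ tequiv Q n (ext a) (tm m).
      move=> He; apply: Hn; apply: tequiv_sym; apply: (tequiv_agree (s := tm m)) => //.
      exact: tequiv_sym.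
    apply: (proj2 (proj2 (HFm m)) Hn').
    rewrite (sat_agree Q (proj1 (HFm m)) (t := s)) //.
  have [g [Hg Hk]] := types_to_aut He.
  exists g; split=> // k; by rewrite -(Hk k (ltn_ord k)) ext_ord.
- case=> g [Hg Hk] m.
  have H1 := proj1 (proj2 (HFm m)).
  rewrite (sat_inv Hg) in H1.
  apply: (proj2 (sat_agree Q (proj1 (HFm m)) (s := s) (t := g \o ext a) _)) => //.
  move=> y lt /=; by rewrite (Hk (Ordinal lt)) -(ext_ord a (Ordinal lt)).
Qed.
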